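(* Let $\alpha\in(0,1)$ and for $\rho\ge0$ and real $\chi\notin\pi\mathbb{Z}$ let $$I_\alpha(\rho,\chi)=\int_{-\infty}^{+\infty}dy\,e^{i\rho\cosh y}\,\frac{e^{-y\alpha}}{1-e^{-2y-2i\chi}} .$$ Then there is a constant $C$ such that $|I_\alpha(\rho,\chi)|\le C$, and for every $0\le\epsilon<\min(\alpha,1-\alpha)$ there is a constant $C(\epsilon)$ such that $$|I_\alpha(\rho,\chi)-I_\alpha(0,\chi)|\le C(\epsilon)\,\rho^{\epsilon},$$ both estimates holding uniformly in $\rho$ and $\chi$. *)

(* Defs.v *)
From Stdlib Require Import Reals.
From Coquelicot Require Import Coquelicot.
Open Scope R_scope.

Definition cexp (z : C) : C :=
  (exp (Re z) * cos (Im z), exp (Re z) * sin (Im z)).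

Definition I_integrand (alpha rho chi : R) (y : R) : C :=
  Cmult (cexp (0, rho * cosh y))
        (Cdiv (RtoC (exp (- (y * alpha))))
              (Cminus (RtoC 1) (cexp (- (2 * y), - (2 * chi))))).

Definition I_alpha (alpha rho chi : R) : C :=
  @RInt_gen C_R_CompleteNormedModule (I_integrand alpha rho chi)
           (Rbar_locally m_infty) (Rbar_locally p_infty).

(* Main.v *)
Require Import Defs.
From Stdlib Require Import Reals Lra Psatz.
From Coquelicot Require Import Coquelicot.
Open Scope R_scope.

Definition hK (alpha chi y : R) : C :=
  Cdiv (RtoC (exp (- (y * alpha)))) (Cminus (RtoC 1) (cexp (- (2 * y), - (2 * chi)))).

Definition Dd (chi y : R) : R := exp (2*y) - 2 * cos (2*chi) + exp (-(2*y)).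

Lemma hK_eq alpha chi y : Dd chi y <> 0 ->
  hK alpha chi y = (exp (- (y * alpha)) * (exp (2*y) - cos (2*chi)) / Dd chi y,
                    - exp (- (y * alpha)) * sin (2*chi) / Dd chi y).
Proof.
intros HD. unfold hK, Dd, Cdiv, Cminus, Cmult, Cinv, cexp, RtoC, Cplus, Copp in *; simpl.
rewrite cos_neg, sin_neg.
assert (Hs : sin (2*chi) * sin (2*chi) = 1 - cos (2*chi) * cos (2*chi)) by (rewrite <- (sin2_cos2 (2*chi)); unfold Rsqr; ring).
set (C2 := cos (2*chi)) in *. set (S2 := sin (2*chi)) in *.
assert (HE : exp (2*y) > 0) by apply exp_pos.
assert (HE' : exp (-(2*y)) = / exp (2*y)) by apply exp_Ropp.
rewrite HE' in *.
set (E := exp (2*y)) in *. set (r := exp (- (y*alpha))).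
assert (Hden : (1 + - (/ E * C2)) * ((1 + - (/ E * C2)) * 1) +
     (0 + - (/ E * - S2)) * ((0 + - (/ E * - S2)) * 1) = (E - 2*C2 + /E) / E).
{ replace ((0 + - (/ E * - S2)) * ((0 + - (/ E * - S2)) * 1)) with (S2*S2/(E*E)) by (field; lra).
  rewrite Hs. field. lra. }
assert (HN : (E - 2 * C2) * E + 1 <> 0).
{ intro H0; apply HD. replace (E - 2*C2 + /E) with (((E - 2 * C2) * E + 1)/E) by (field; lra).
  rewrite H0; unfold Rdiv; ring. }
rewrite Hden. f_equal; field; repeat split; try lra; auto.
Qed.
Lemma div_nn (x y : R) : 0 <= x -> 0 < y -> 0 <= x / y.
Proof. intros. unfold Rdiv. apply Rmult_le_pos. lra. apply Rlt_le, Rinv_0_lt_compat; lra. Qed.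

Lemma alg (E a b s c : R) : 1 <= E -> 1 <= a -> a <= E -> 1 <= b -> a*b <= E ->
  s*s + c*c = 1 -> s <> 0 ->
  b * (Rabs (/a * (E*E - (1 - 2*(s*s))) / (E*E - 2*(1 - 2*(s*s)) + /(E*E))
             + a * (/(E*E) - (1 - 2*(s*s))) / (E*E - 2*(1 - 2*(s*s)) + /(E*E)))
       + Rabs (- /a * (2*s*c) / (E*E - 2*(1 - 2*(s*s)) + /(E*E))
               - a * (2*s*c) / (E*E - 2*(1 - 2*(s*s)) + /(E*E))))
  <= b / a + 4 * Rabs s * ((E + /E)/2) / (((E - /E)/2)^2 + s^2).
Proof.
intros HE Ha HaE Hb Hab Hsc Hs.
set (u := E - /E).
assert (HiE : 0 < /E <= 1). { split. apply Rinv_0_lt_compat; lra. rewrite <- Rinv_1. apply Rinv_le_contravar; lra. }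
assert (Hia : 0 < /a <= 1). { split. apply Rinv_0_lt_compat; lra. rewrite <- Rinv_1. apply Rinv_le_contravar; lra. }
assert (Hu : 0 <= u) by (unfold u; lra).
assert (Hs2 : 0 < s*s) by (apply Rsqr_pos_lt; auto).
set (D := u*u + 4*(s*s)).
assert (HD : 0 < D) by (unfold D; nra).
assert (HDe : E*E - 2*(1 - 2*(s*s)) + /(E*E) = D).
{ unfold D, u. field. lra. }
rewrite HDe.
assert (HRe : /a * (E*E - (1 - 2*(s*s))) / D + a * (/(E*E) - (1 - 2*(s*s))) / D
   = ((E*E - a*a) * (1 - /(E*E)) / a + 2*(s*s)*(a + /a)) / D).
{ field. split; lra. }
rewrite HRe.
assert (HIm : - /a * (2*s*c) / D - a * (2*s*c) / D = - (2*s*c) * (a + /a) / D).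
{ field. split; lra. }
rewrite HIm.
assert (Hc : Rabs c <= 1).
{ apply Rabs_le. nra. }
assert (HP1 : 0 <= (E*E - a*a) * (1 - /(E*E))).
{ apply Rmult_le_pos. nra. assert (/(E*E) <= 1). rewrite Rinv_mult. nra. lra. }
assert (HP1' : (E*E - a*a) * (1 - /(E*E)) <= u*u).
{ replace (u*u) with ((E*E - 1) * (1 - /(E*E))) by (unfold u; field; lra).
  apply Rmult_le_compat_r. assert (/(E*E) <= 1). rewrite Rinv_mult. nra. lra. nra. }
assert (Hre0 : 0 <= ((E*E - a*a) * (1 - /(E*E)) / a + 2*(s*s)*(a + /a)) / D).
{ apply div_nn; [|lra]. apply Rplus_le_le_0_compat.
  apply div_nn; lra. nra. }
rewrite (Rabs_right _ (Rle_ge _ _ Hre0)).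
assert (Habs_s : s*s <= Rabs s).
{ assert (Rabs s <= 1). { apply Rabs_le. nra. }
  rewrite <- (Rabs_right (s*s)) by nra. rewrite Rabs_mult. 
  assert (0 <= Rabs s) by apply Rabs_pos. nra. }
assert (Hba : b * (a + /a) <= 2 * E). { nra. }
assert (HIm2 : Rabs (- (2*s*c) * (a + /a) / D) <= 2 * Rabs s * (a + /a) / D).
{ unfold Rdiv. rewrite !Rabs_mult, Rabs_Ropp, !Rabs_mult.
  rewrite (Rabs_right 2) by lra. rewrite (Rabs_right (a + /a)) by lra.
  rewrite (Rabs_right (/D)) by (apply Rle_ge, Rlt_le, Rinv_0_lt_compat; lra).
  assert (0 <= Rabs s) by apply Rabs_pos. assert (0 < /D) by (apply Rinv_0_lt_compat; lra).
  assert (0 <= Rabs s * (a + /a)) by nra.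
  assert (Rabs s * Rabs c <= Rabs s) by nra. apply Rmult_le_compat_r; [lra|]. apply Rmult_le_compat_r; [lra|]. nra. }
assert (HRHS : 4 * Rabs s * ((E + /E)/2) / ((u/2)^2 + s^2) = 8 * Rabs s * (E + /E) / D).
{ unfold D, u. field. split. lra.
  assert (0 < E * E) by nra.
  assert (0 < 4 * (s * s) * (E * E)) by (apply Rmult_lt_0_compat; lra).
  pose proof (Rle_0_sqr (E*E-1)) as Hsq; unfold Rsqr in Hsq.
  apply Rgt_not_eq. lra. }
rewrite HRHS.
assert (Hfirst : b * ((E*E - a*a) * (1 - /(E*E)) / a / D) <= b / a).
{ unfold Rdiv. 
  assert (0 < /D) by (apply Rinv_0_lt_compat; lra).
  assert ((E*E - a*a) * (1 - /(E*E)) * /D <= 1).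
  { apply (Rmult_le_reg_r D). lra. rewrite Rmult_assoc, Rinv_l by lra. unfold D. nra. }
  assert (0 < b * /a) by (apply Rmult_lt_0_compat; lra).
  replace (b * ((E*E - a*a) * (1 - /(E*E)) * /a * /D)) with ((b * /a) * ((E*E - a*a) * (1 - /(E*E)) * /D)) by ring.
  nra. }
assert (Hsecond : b * (2*(s*s)*(a + /a) / D) <= 4 * Rabs s * E / D).
{ unfold Rdiv. assert (0 < /D) by (apply Rinv_0_lt_compat; lra).
  apply Rmult_le_compat_r with (r := /D) in Hba; [|lra].
  assert (0 <= b * (a + /a)) by nra.
  replace (b * (2*(s*s)*(a + /a) * /D)) with (2*(s*s) * (b * (a + /a)) * /D) by ring.
  replace (4 * Rabs s * E * /D) with (2 * Rabs s * (2 * E) * /D) by ring.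
  apply Rmult_le_compat_r. lra.
  apply Rmult_le_compat; nra. }
assert (Hthird : b * (2 * Rabs s * (a + /a) / D) <= 4 * Rabs s * E / D).
{ unfold Rdiv. assert (0 < /D) by (apply Rinv_0_lt_compat; lra).
  assert (0 <= Rabs s) by apply Rabs_pos.
  replace (b * (2 * Rabs s * (a + /a) * /D)) with (2 * Rabs s * /D * (b * (a + /a))) by ring.
  replace (4 * Rabs s * E * /D) with (2 * Rabs s * /D * (2 * E)) by ring.
  apply Rmult_le_compat_l. apply Rmult_le_pos; lra. lra. }
assert (Hlast : 8 * Rabs s * E / D <= 8 * Rabs s * (E + /E) / D).
{ unfold Rdiv. assert (0 < /D) by (apply Rinv_0_lt_compat; lra).
  assert (0 <= Rabs s) by apply Rabs_pos. 
  apply Rmult_le_compat_r; [lra|]. nra. }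
assert (Hsplit : ((E*E - a*a) * (1 - /(E*E)) / a + 2*(s*s)*(a + /a)) / D
   = (E*E - a*a) * (1 - /(E*E)) / a / D + 2*(s*s)*(a + /a) / D) by (field; split; lra).
rewrite Hsplit.
assert (b * Rabs (- (2*s*c) * (a + /a) / D) <= b * (2 * Rabs s * (a + /a) / D)).
{ apply Rmult_le_compat_l; lra. }
assert (8 * Rabs s * E / D = 4 * Rabs s * E / D + 4 * Rabs s * E / D) by (field; lra).
nra.
Qed.

Lemma Cmod_le_sum (z : C) : Cmod z <= Rabs (fst z) + Rabs (snd z).
Proof.
destruct z as [x y]. unfold Cmod; simpl.
rewrite <- (sqrt_Rsqr (Rabs x + Rabs y)) by (generalize (Rabs_pos x) (Rabs_pos y); lra).
apply sqrt_le_1_alt. unfold Rsqr.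
assert (x*x = Rabs x * Rabs x) by (unfold Rabs; destruct (Rcase_abs x); ring).
assert (y*y = Rabs y * Rabs y) by (unfold Rabs; destruct (Rcase_abs y); ring).
generalize (Rabs_pos x) (Rabs_pos y). nra.
Qed.

Lemma Dd_eq chi y : Dd chi y = (exp y - exp (-y))^2 + 4 * (sin chi)^2.
Proof.
unfold Dd. rewrite cos_2a_sin.
replace (2*y) with (y+y) by ring. rewrite exp_plus.
replace (-(y+y)) with ((-y)+(-y)) by ring. rewrite exp_plus.
assert (exp y * exp (-y) = 1) by (rewrite <- exp_plus; replace (y + -y) with 0 by ring; apply exp_0).
nra.
Qed.

Lemma Dd_pos chi y : sin chi <> 0 -> 0 < Dd chi y.
Proof.
intros Hs. rewrite Dd_eq. assert (0 < sin chi * sin chi) by (apply Rsqr_pos_lt; auto).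
replace ((exp y - exp(-y))^2) with (Rsqr (exp y - exp (-y))) by (unfold Rsqr; ring).
replace (sin chi ^2) with (sin chi * sin chi) by ring. pose proof (Rle_0_sqr (exp y - exp (-y))). lra.
Qed.

Lemma exp_le_exp x y : x <= y -> exp x <= exp y.
Proof. intros [H|H]. left; apply exp_increasing; auto. subst; lra. Qed.

Lemma Dd_neg chi y : Dd chi (-y) = Dd chi y.
Proof. unfold Dd. replace (-(2 * -y)) with (2*y) by ring. replace (2 * -y) with (-(2*y)) by ring. ring. Qed.

Lemma M_bound alpha chi eps y : 0 < alpha -> 0 <= eps -> alpha + eps <= 1 -> sin chi <> 0 -> 0 <= y ->
  exp (eps*y) * Cmod (Cplus (hK alpha chi y) (hK alpha chi (-y)))
  <= exp ((eps - alpha)*y) + 4 * Rabs (sin chi) * cosh y / (sinh y ^2 + sin chi ^2).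
Proof.
intros Ha He Hae Hs Hy.
rewrite (hK_eq alpha chi y) by (apply Rgt_not_eq, Dd_pos; auto).
rewrite (hK_eq alpha chi (-y)) by (apply Rgt_not_eq, Dd_pos; auto).
rewrite Dd_neg.
pose proof (Dd_pos chi y Hs) as HD.
unfold Dd in *.
assert (HE1 : 1 <= exp y) by (rewrite <- exp_0; apply exp_le_exp; lra).
assert (Ha1 : 1 <= exp (alpha*y)) by (rewrite <- exp_0; apply exp_le_exp; nra).
assert (HaE : exp (alpha*y) <= exp y) by (apply exp_le_exp; nra).
assert (Hb1 : 1 <= exp (eps*y)) by (rewrite <- exp_0; apply exp_le_exp; nra).
assert (Hab : exp (alpha*y) * exp (eps*y) <= exp y) by (rewrite <- exp_plus; apply exp_le_exp; nra).
assert (e1 : exp (- (y*alpha)) = / exp (alpha*y)) by (rewrite <- exp_Ropp; f_equal; ring).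
assert (e2 : exp (- (-y*alpha)) = exp (alpha*y)) by (f_equal; ring).
assert (e3 : exp (2*y) = exp y * exp y) by (rewrite <- exp_plus; f_equal; ring).
assert (e4 : exp (-(2*y)) = /(exp y * exp y)) by (rewrite <- e3, <- exp_Ropp; reflexivity).
assert (e5 : exp (2 * -y) = /(exp y * exp y)) by (rewrite <- e4; f_equal; ring).
assert (e6 : exp ((eps-alpha)*y) = exp (eps*y) / exp (alpha*y)).
{ unfold Rdiv. rewrite <- exp_Ropp, <- exp_plus. f_equal; ring. }
assert (e7 : cosh y = (exp y + / exp y)/2) by (unfold cosh; rewrite exp_Ropp; reflexivity).
assert (e8 : sinh y = (exp y - / exp y)/2) by (unfold sinh; rewrite exp_Ropp; reflexivity).
rewrite cos_2a_sin, sin_2a in *.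
rewrite e1, e2, e5, e6, e7, e8, e4, e3 in *.
set (E := exp y) in *. set (a := exp (alpha*y)) in *. set (b := exp (eps*y)) in *.
set (s := sin chi) in *. set (c := cos chi).
assert (Hsc : s*s + c*c = 1) by (unfold s, c; rewrite <- (sin2_cos2 chi); unfold Rsqr; ring).
set (D := E * E - 2 * (1 - 2 * s * s) + / (E * E)) in *.
simpl.
eapply Rle_trans; [| apply (alg E a b s c); auto; try lra; rewrite Rmult_comm; auto].
apply Rmult_le_compat_l; [lra|].
eapply Rle_trans; [apply Cmod_le_sum|]. simpl.
replace (E * E - 2 * (1 - 2 * (s * s)) + / (E * E)) with D by (unfold D; ring).
clearbody D a b E s c. assert (Q1 : (- / a * (2 * s * c) / D + - a * (2 * s * c) / D) = (- / a * (2 * s * c) / D - a * (2 * s * c) / D)) by (field; split; lra). assert (Q2 : 1 - 2*s*s = 1 - 2*(s*s)) by ring. rewrite Q1, Q2. lra.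
Qed.

Lemma abs_sin_le x : Rabs (sin x) <= Rabs x.
Proof.
assert (H : forall x, 0 <= x -> Rabs (sin x) <= x).
{ intros z Hz. destruct (Req_dec z 0) as [->|Hz0]. rewrite sin_0, Rabs_R0; lra.
  assert (sin z < z) by (apply sin_lt_x; lra).
  apply Rabs_le. split; [|lra].
  destruct (Rle_lt_dec z 1).
  - assert (0 <= sin z) by (apply sin_ge_0; generalize PI2_1; lra). lra.
  - generalize (SIN_bound z). lra. }
destruct (Rle_lt_dec 0 x).
- rewrite (Rabs_right x) by lra. auto.
- rewrite <- (Ropp_involutive x), sin_neg, Rabs_Ropp, Rabs_Ropp. rewrite (Rabs_right (-x)) by lra. apply H; lra.
Qed.

Lemma cexp_m1 th : Cmod (Cminus (cexp (0, th)) (RtoC 1)) = 2 * Rabs (sin (th/2)).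
Proof.
unfold cexp, Cminus, Cmod, RtoC, Cplus, Copp; simpl. rewrite exp_0.
assert (E1 : cos th = 1 - 2 * sin (th/2) * sin (th/2)) by (rewrite <- cos_2a_sin; f_equal; field).
assert (E2 : sin th = 2 * sin (th/2) * cos (th/2)) by (rewrite <- sin_2a; f_equal; field).
rewrite E1, E2.
set (s := sin (th/2)). set (c := cos (th/2)).
assert (Hsc : s*s + c*c = 1) by (unfold s, c; rewrite <- (sin2_cos2 (th/2)); unfold Rsqr; ring).
replace ((1 * (1 - 2 * s * s) + - (1)) * ((1 * (1 - 2 * s * s) + - (1)) * 1) + (1 * (2 * s * c) + - 0) * ((1 * (2 * s * c) + - 0) * 1))
  with ((2 * Rabs s) * (2 * Rabs s)).
apply sqrt_square. generalize (Rabs_pos s); lra.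
assert (s*s = Rabs s * Rabs s) by (unfold Rabs; destruct (Rcase_abs s); ring).
transitivity (4 * (s*s) * (s*s + c*c)). rewrite Hsc, H. ring. ring.
Qed.

Lemma cexp_m1_le th eps : 0 < th -> 0 <= eps <= 1 ->
  Cmod (Cminus (cexp (0, th)) (RtoC 1)) <= 2 * Rpower th eps.
Proof.
intros Hth He. rewrite cexp_m1.
destruct (Rle_lt_dec 1 th).
- assert (1 <= Rpower th eps).
  { rewrite <- (Rpower_O th) by lra. apply Rle_Rpower; lra. }
  assert (Rabs (sin (th/2)) <= 1) by (apply Rabs_le; apply SIN_bound). lra.
- assert (Rabs (sin (th/2)) <= th/2).
  { eapply Rle_trans. apply abs_sin_le. rewrite Rabs_right; lra. }
  assert (th <= Rpower th eps).
  { unfold Rpower. rewrite <- (exp_ln th) at 1 by lra. apply exp_le_exp.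
    assert (ln th < 0). { rewrite <- ln_1. apply ln_increasing; lra. } nra. }
  lra.
Qed.

Lemma cexp_mod1 th : Cmod (cexp (0, th)) = 1.
Proof.
unfold cexp, Cmod; simpl. rewrite exp_0.
replace (1 * cos th * (1 * cos th * 1) + 1 * sin th * (1 * sin th * 1)) with (Rsqr (sin th) + Rsqr (cos th)) by (unfold Rsqr; ring).
rewrite sin2_cos2. apply sqrt_1.
Qed.

Definition Mm (alpha chi y : R) : C := Cplus (hK alpha chi y) (hK alpha chi (-y)).
Definition mfun (alpha chi eps y : R) : R :=
  exp ((eps - alpha)*y) + 4 * Rabs (sin chi) * cosh y / (sinh y ^2 + sin chi ^2).

Lemma cosh_opp y : cosh (-y) = cosh y.
Proof. unfold cosh. rewrite Ropp_involutive. lra. Qed.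

Lemma sym_eq alpha rho chi y :
  Cplus (I_integrand alpha rho chi y) (I_integrand alpha rho chi (-y))
  = Cmult (cexp (0, rho * cosh y)) (Mm alpha chi y).
Proof.
unfold I_integrand, Mm, hK. rewrite cosh_opp. ring.
Qed.

Lemma cexp_00 : cexp (0, 0) = RtoC 1.
Proof. unfold cexp, RtoC; simpl. rewrite exp_0, cos_0, sin_0. f_equal; ring. Qed.

Lemma pt_bound alpha rho chi y : 0 < alpha < 1 -> sin chi <> 0 -> 0 <= y ->
  Cmod (Cplus (I_integrand alpha rho chi y) (I_integrand alpha rho chi (-y))) <= mfun alpha chi 0 y.
Proof.
intros Ha Hs Hy. rewrite sym_eq, Cmod_mult, cexp_mod1, Rmult_1_l.
pose proof (M_bound alpha chi 0 y) as H.
rewrite Rmult_0_l, exp_0, Rmult_1_l in H. apply H; lra.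
Qed.

Lemma pt_diff alpha rho chi eps y : 0 < alpha -> 0 < rho -> 0 <= eps -> alpha + eps <= 1 ->
  sin chi <> 0 -> 0 <= y ->
  Cmod (Cminus (Cplus (I_integrand alpha rho chi y) (I_integrand alpha rho chi (-y)))
               (Cplus (I_integrand alpha 0 chi y) (I_integrand alpha 0 chi (-y))))
  <= 2 * Rpower rho eps * mfun alpha chi eps y.
Proof.
intros Ha Hr He Hae Hs Hy. rewrite !sym_eq. rewrite Rmult_0_l, cexp_00.
replace (Cminus (Cmult (cexp (0, rho * cosh y)) (Mm alpha chi y)) (Cmult (RtoC 1) (Mm alpha chi y)))
  with (Cmult (Cminus (cexp (0, rho * cosh y)) (RtoC 1)) (Mm alpha chi y)) by ring.
rewrite Cmod_mult.
assert (Hc1 : 1 <= cosh y).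
{ unfold cosh. assert (exp y * exp (-y) = 1) by (rewrite <- exp_plus; replace (y + -y) with 0 by ring; apply exp_0).
  assert (1 <= exp y) by (rewrite <- exp_0; apply exp_le_exp; lra).
  assert (0 < exp (-y)) by apply exp_pos. nra. }
assert (Hce : cosh y <= exp y).
{ unfold cosh. assert (exp (-y) <= exp y) by (apply exp_le_exp; lra). lra. }
assert (H1 : Cmod (Cminus (cexp (0, rho * cosh y)) (RtoC 1)) <= 2 * Rpower rho eps * exp (eps * y)).
{ eapply Rle_trans. apply (cexp_m1_le _ eps). apply Rmult_lt_0_compat; lra. split; lra.
  rewrite <- Rpower_mult_distr by lra. rewrite Rmult_assoc. apply Rmult_le_compat_l; [lra|].
  apply Rmult_le_compat_l. unfold Rpower; left; apply exp_pos.
  replace (exp (eps * y)) with (Rpower (exp y) eps) by (unfold Rpower; rewrite ln_exp; reflexivity).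
  apply Rle_Rpower_l; lra. }
pose proof (M_bound alpha chi eps y Ha He Hae Hs Hy) as H2.
pose proof (Cmod_ge_0 (Mm alpha chi y)).
assert (0 <= 2 * Rpower rho eps) by (unfold Rpower; generalize (exp_pos (eps * ln rho)); lra).
eapply Rle_trans. apply Rmult_le_compat_r. auto. apply H1.
rewrite Rmult_assoc. apply Rmult_le_compat_l. auto. unfold Mm in *. exact H2.
Qed.

Lemma mfun_cont alpha chi eps x : sin chi <> 0 -> continuous (mfun alpha chi eps) x.
Proof.
intros Hs. apply (@ex_derive_continuous R_AbsRing R_NormedModule). unfold mfun. auto_derive.
assert (0 < sin chi * sin chi) by (apply Rsqr_pos_lt; auto).
assert (0 <= sinh x * sinh x) by (apply Rle_0_sqr).
apply Rgt_not_eq. lra.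
Qed.

Definition Gfun (alpha chi eps y : R) : R :=
  exp ((eps - alpha)*y) / (eps - alpha) + 4 * atan (sinh y / Rabs (sin chi)).

Lemma Gfun_deriv alpha chi eps x : sin chi <> 0 -> eps <> alpha ->
  is_derive (Gfun alpha chi eps) x (mfun alpha chi eps x).
Proof.
intros Hs He.
assert (Ha : 0 < Rabs (sin chi)) by (apply Rabs_pos_lt; auto).
assert (Hat : forall z, is_derive atan z (/ (1 + z^2))).
{ intros z. apply is_derive_Reals. apply derivable_pt_lim_atan. }
assert (Hsh : is_derive (fun y => sinh y / Rabs (sin chi)) x (cosh x / Rabs (sin chi))).
{ auto_derive. auto. field. lra. }
pose proof (is_derive_comp atan (fun y => sinh y / Rabs (sin chi)) x _ _ (Hat _) Hsh) as Hc.
unfold Gfun.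
evar (d1 : R).
assert (H1 : is_derive (fun y => exp ((eps - alpha)*y) / (eps - alpha)) x d1).
{ auto_derive. auto. unfold d1. reflexivity. }
pose proof (is_derive_scal _ x 4 _ Hc) as H2.
pose proof (is_derive_plus _ _ x _ _ H1 H2) as H3.
replace (mfun alpha chi eps x) with (plus d1 (4 * scal (cosh x / Rabs (sin chi)) (/ (1 + (sinh x / Rabs (sin chi)) ^ 2)))).
- eapply is_derive_ext; [|exact H3]. intros; reflexivity.
- unfold d1, mfun, plus, scal; simpl. unfold mult; simpl.
  assert (E : sin chi * (sin chi * 1) = Rabs (sin chi) * (Rabs (sin chi) * 1)) by (unfold Rabs; destruct (Rcase_abs (sin chi)); ring).
  rewrite E. field.
  assert (0 < Rabs (sin chi) * Rabs (sin chi)) by (apply Rmult_lt_0_compat; lra).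
  assert (0 <= sinh x * sinh x) by apply Rle_0_sqr.
  repeat split; try lra; apply Rgt_not_eq; lra.
Qed.

Lemma is_RInt_m alpha chi eps n : sin chi <> 0 -> eps < alpha ->
  is_RInt (mfun alpha chi eps) 0 n (Gfun alpha chi eps n - Gfun alpha chi eps 0).
Proof.
intros Hs He.
apply (is_RInt_derive (Gfun alpha chi eps) (mfun alpha chi eps)).
- intros; apply Gfun_deriv; auto; lra.
- intros; apply mfun_cont; auto.
Qed.

Lemma Gfun_diff_le alpha chi eps n : sin chi <> 0 -> eps < alpha -> 0 <= n ->
  Gfun alpha chi eps n - Gfun alpha chi eps 0 <= / (alpha - eps) + 2 * PI.
Proof.
intros Hs He Hn. unfold Gfun.
rewrite Rmult_0_r, exp_0. unfold sinh at 2. rewrite Ropp_0, exp_0.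
replace ((1 - 1)/2 / Rabs (sin chi)) with 0 by (field; apply Rabs_no_R0; auto).
rewrite atan_0.
assert (0 < exp ((eps - alpha) * n)) by apply exp_pos.
destruct (atan_bound (sinh n / Rabs (sin chi))).
assert (exp ((eps - alpha) * n) / (eps - alpha) <= 0).
{ unfold Rdiv. assert (/ (eps - alpha) < 0) by (apply Rinv_lt_0_compat; lra). nra. }
assert (1 / (eps - alpha) = - / (alpha - eps)) by (field; lra).
lra.
Qed.

Definition Acomp alpha chi t := exp (- (t * alpha)) * (exp (2*t) - cos (2*chi)) / Dd chi t.
Definition Bcomp alpha chi t := - exp (- (t * alpha)) * sin (2*chi) / Dd chi t.

Lemma I_closed alpha rho chi t : sin chi <> 0 ->
  I_integrand alpha rho chi t =
  (cos (rho * cosh t) * Acomp alpha chi t - sin (rho * cosh t) * Bcomp alpha chi t,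
   cos (rho * cosh t) * Bcomp alpha chi t + sin (rho * cosh t) * Acomp alpha chi t).
Proof.
intros Hs. unfold I_integrand. fold (hK alpha chi t).
rewrite hK_eq by (apply Rgt_not_eq, Dd_pos; auto).
unfold cexp, Cmult, Acomp, Bcomp; simpl. rewrite exp_0. f_equal; ring.
Qed.

Lemma I_exRInt alpha rho chi a b : sin chi <> 0 -> ex_RInt (I_integrand alpha rho chi) a b.
Proof.
intros Hs.
apply (ex_RInt_ext (fun t => (cos (rho * cosh t) * Acomp alpha chi t - sin (rho * cosh t) * Bcomp alpha chi t,
   cos (rho * cosh t) * Bcomp alpha chi t + sin (rho * cosh t) * Acomp alpha chi t))).
{ intros; symmetry; apply I_closed; auto. }
apply ex_RInt_fct_extend_pair; simpl; apply (@ex_RInt_continuous R_CompleteNormedModule); intros z _;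
  apply (@ex_derive_continuous R_AbsRing R_NormedModule); unfold Acomp, Bcomp, Dd; auto_derive;
  (assert (Hz : exp (2 * z) + - (2 * cos (2 * chi)) + exp (- (2 * z)) <> 0) by
    (apply Rgt_not_eq; generalize (Dd_pos chi z Hs); unfold Dd; lra));
  repeat split; auto.
Qed.

Lemma exp2_gt4 : 4 < exp 2.
Proof.
replace 2 with (1 + 1) by ring. rewrite exp_plus.
assert (2 < exp 1) by (generalize (exp_ineq1 1 ltac:(lra)); lra). nra.
Qed.

Lemma hK_mod_le alpha chi y : sin chi <> 0 ->
  Cmod (hK alpha chi y) <= exp (- (y * alpha)) * (exp (2*y) + 2) / Dd chi y.
Proof.
intros Hs. pose proof (Dd_pos chi y Hs) as HD.
rewrite hK_eq by lra.
eapply Rle_trans; [apply Cmod_le_sum|]. simpl.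
set (r := exp (- (y * alpha))). set (P := exp (2*y)). set (D := Dd chi y) in *.
assert (Hr : 0 < r) by apply exp_pos. assert (HP : 0 < P) by apply exp_pos.
assert (HC := COS_bound (2*chi)). assert (HS := SIN_bound (2*chi)).
unfold Rdiv. rewrite !Rabs_mult. rewrite Rabs_Ropp.
rewrite (Rabs_right r) by lra. rewrite (Rabs_right (/D)) by (apply Rle_ge, Rlt_le, Rinv_0_lt_compat; lra).
assert (Rabs (P - cos (2*chi)) <= P + 1) by (apply Rabs_le; split; lra).
assert (Rabs (sin (2*chi)) <= 1) by (apply Rabs_le; lra).
assert (0 < /D) by (apply Rinv_0_lt_compat; lra).
assert (0 < r * /D) by (apply Rmult_lt_0_compat; lra).
replace (r * Rabs (P - cos (2 * chi)) * / D + r * Rabs (sin (2 * chi)) * / D) with ((r * /D) * (Rabs (P - cos (2 * chi)) + Rabs (sin (2 * chi)))) by ring.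
replace (r * (P + 2) * / D) with ((r * /D) * (P + 2)) by ring.
apply Rmult_le_compat_l; lra.
Qed.

Lemma tail_pos alpha rho chi y : 0 < alpha < 1 -> sin chi <> 0 -> 1 <= y ->
  Cmod (I_integrand alpha rho chi y) <= 6 * exp (- (alpha * y)).
Proof.
intros Ha Hs Hy.
unfold I_integrand. fold (hK alpha chi y). rewrite Cmod_mult, cexp_mod1, Rmult_1_l.
eapply Rle_trans. apply hK_mod_le; auto.
pose proof (Dd_pos chi y Hs) as HD.
assert (HP : 4 < exp (2*y)) by (eapply Rlt_le_trans; [apply exp2_gt4| apply exp_le_exp; lra]).
assert (HD2 : exp (2*y) - 2 <= Dd chi y).
{ unfold Dd. generalize (COS_bound (2*chi)) (exp_pos (-(2*y))). lra. }
replace (- (alpha * y)) with (- (y * alpha)) by ring.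
set (r := exp (- (y * alpha))). assert (0 < r) by apply exp_pos.
set (P := exp (2*y)) in *. set (D := Dd chi y) in *.
unfold Rdiv. apply (Rmult_le_reg_r D). lra.
rewrite Rmult_assoc, Rinv_l by lra.
assert (P + 2 <= 6 * D) by lra.
nra.
Qed.

Lemma tail_neg alpha rho chi y : 0 < alpha < 1 -> sin chi <> 0 -> y <= -1 ->
  Cmod (I_integrand alpha rho chi y) <= 6 * exp (alpha * y).
Proof.
intros Ha Hs Hy.
unfold I_integrand. fold (hK alpha chi y). rewrite Cmod_mult, cexp_mod1, Rmult_1_l.
eapply Rle_trans. apply hK_mod_le; auto.
pose proof (Dd_pos chi y Hs) as HD.
assert (HQ : 4 < exp (-(2*y))) by (eapply Rlt_le_trans; [apply exp2_gt4| apply exp_le_exp; lra]).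
assert (HPQ : exp (2*y) * exp (-(2*y)) = 1) by (rewrite <- exp_plus; replace (2*y + -(2*y)) with 0 by ring; apply exp_0).
assert (HD2 : exp (-(2*y)) - 2 <= Dd chi y).
{ unfold Dd. generalize (COS_bound (2*chi)) (exp_pos (2*y)). lra. }
assert (Hrp : exp (- (y * alpha)) * exp (2*y) <= exp (alpha * y)).
{ rewrite <- exp_plus. apply exp_le_exp. nra. }
set (r := exp (- (y * alpha))) in *. assert (0 < r) by apply exp_pos.
set (P := exp (2*y)) in *. set (Q := exp (-(2*y))) in *. set (D := Dd chi y) in *.
assert (0 < P) by apply exp_pos.
assert (HP4 : P * 4 < 1) by nra.
apply Rle_trans with (6 * (r * P)); [|lra].
unfold Rdiv. apply (Rmult_le_reg_r D). lra.
rewrite Rmult_assoc, Rinv_l by lra.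
assert (P + 2 <= 6 * P * D) by nra.
nra.
Qed.

Notation RIntC := (@RInt C_R_CompleteNormedModule).

Lemma le_eps (x y : R) : (forall e, 0 < e -> x <= y + e) -> x <= y.
Proof.
intros H. destruct (Rle_lt_dec x y); auto.
specialize (H ((x - y)/2) ltac:(lra)). lra.
Qed.

Lemma minus_C (x y : C) : @minus C_R_CompleteNormedModule x y = Cminus x y.
Proof. destruct x, y; reflexivity. Qed.
Lemma plus_C (x y : C) : @plus C_R_CompleteNormedModule x y = Cplus x y.
Proof. destruct x, y; reflexivity. Qed.
Lemma norm_C (x : C) : @norm R_AbsRing C_R_CompleteNormedModule x = Cmod x.
Proof. symmetry. apply Cmod_norm. Qed.

Lemma gen_bound (f : R -> C) (l : C) (B : R) :
  @is_RInt_gen C_R_CompleteNormedModule f (Rbar_locally m_infty) (Rbar_locally p_infty) l ->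
  (forall n, 0 <= n -> Cmod (@RInt C_R_CompleteNormedModule f (-n) n) <= B) -> Cmod l <= B.
Proof.
intros Hl HB.
apply le_eps. intros e He.
set (eps := mkposreal (e / sqrt 2) ltac:(apply Rdiv_lt_0_compat; [lra| apply sqrt_lt_R0; lra])).
assert (Hball := Hl (ball l eps) (locally_ball l eps)).
destruct Hball as [Q R HQ HR HQR].
destruct HQ as [M1 HM1]. destruct HR as [M2 HM2].
set (n := Rabs M1 + Rabs M2 + 1).
assert (Hn : 0 <= n) by (unfold n; generalize (Rabs_pos M1) (Rabs_pos M2); lra).
destruct (HQR (-n) n) as [y [Hy1 Hy2]].
{ apply HM1. unfold n. generalize (Rle_abs (-M1)) (Rabs_pos M2). rewrite Rabs_Ropp. lra. }
{ apply HM2. unfold n. generalize (Rle_abs M2) (Rabs_pos M1). lra. }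
simpl in Hy1. apply is_RInt_unique in Hy1.
apply C_NormedModule_mixin_compat2 in Hy2.
specialize (HB n Hn). rewrite Hy1 in HB.
assert (Hy3 : Cmod (Cminus y l) < sqrt 2 * eps) by exact Hy2. clear Hy2. rename Hy3 into Hy2.
assert (Heq : l = Cminus y (Cminus y l)) by ring.
rewrite Heq. unfold Cminus.
eapply Rle_trans. apply Cmod_triangle. rewrite Cmod_opp.
simpl in Hy2. replace (sqrt 2 * (e / sqrt 2)) with e in Hy2 by (field; apply Rgt_not_eq, sqrt_lt_R0; lra).
unfold Cminus in Hy2. lra.
Qed.

Lemma ex_gen (f : R -> C) :
  (forall a b, @ex_RInt C_R_CompleteNormedModule f a b) ->
  (forall eps, 0 < eps -> exists A, forall u v, A <= u -> A <= v -> Cmod (@RInt C_R_CompleteNormedModule f u v) < eps) ->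
  (forall eps, 0 < eps -> exists A, forall u v, u <= A -> v <= A -> Cmod (@RInt C_R_CompleteNormedModule f u v) < eps) ->
  exists l, @is_RInt_gen C_R_CompleteNormedModule f (Rbar_locally m_infty) (Rbar_locally p_infty) l.
Proof.
intros Hex Hp Hm.
assert (HF : ProperFilter (filter_prod (Rbar_locally m_infty) (Rbar_locally p_infty))).
{ apply filter_prod_proper; apply Rbar_locally_filter. }
destruct (proj1 (filterlim_locally_cauchy (U := C_R_CompleteNormedModule) (F := filter_prod (Rbar_locally m_infty) (Rbar_locally p_infty))
   (fun ab => @RInt C_R_CompleteNormedModule f (fst ab) (snd ab)))) as [l Hl].
- intros eps.
  destruct (Hp (eps/2)) as [A1 HA1]. generalize (cond_pos eps); lra.
  destruct (Hm (eps/2)) as [A2 HA2]. generalize (cond_pos eps); lra.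
  exists (fun ab => fst ab < A2 /\ A1 < snd ab). split.
  + apply (Filter_prod _ _ _ (fun x => x < A2) (fun y => A1 < y)).
    * exists A2. auto.
    * exists A1. auto.
    * intros x y H1 H2. simpl. auto.
  + intros [a b] [a' b'] [Ha Hb] [Ha' Hb']. simpl in *.
    apply (C_NormedModule_mixin_compat1).
    assert (E1 := RInt_Chasles (V := C_R_CompleteNormedModule) f a' a b (Hex _ _) (Hex _ _)).
    assert (E2 := RInt_Chasles (V := C_R_CompleteNormedModule) f a' b b' (Hex _ _) (Hex _ _)).
    rewrite plus_C in E1, E2.
    assert (Heq : Cminus (RIntC f a' b') (RIntC f a b) = Cplus (RIntC f a' a) (RIntC f b b')).
    { rewrite <- E2, <- E1. ring. }
    assert (Hm' : Cmod (Cminus (RIntC f a' b') (RIntC f a b)) < eps).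
    { rewrite Heq. eapply Rle_lt_trans. apply Cmod_triangle.
      specialize (HA2 a' a ltac:(lra) ltac:(lra)). specialize (HA1 b b' ltac:(lra) ltac:(lra)). lra. }
    exact Hm'.
- exists l. unfold is_RInt_gen.
  apply (filterlimi_lim_ext (fun ab => @RInt C_R_CompleteNormedModule f (fst ab) (snd ab))).
  intros; apply RInt_correct; auto.
  exact Hl.
Qed.

Lemma sym_is (f : R -> C) n : (forall a b, @ex_RInt C_R_CompleteNormedModule f a b) ->
  @is_RInt C_R_CompleteNormedModule (fun y => Cplus (f y) (f (-y))) 0 n (RIntC f (-n) n).
Proof.
intros Hex.
assert (h1 : @is_RInt C_R_CompleteNormedModule f 0 n (RIntC f 0 n)) by (apply RInt_correct; auto).
assert (h2 : @is_RInt C_R_CompleteNormedModule (fun y => f (-y)) 0 n (RIntC f (-n) 0)).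
{ assert (h : @is_RInt C_R_CompleteNormedModule f (-n) (-0) (RIntC f (-n) 0)) by (rewrite Ropp_0; apply RInt_correct; auto).
  apply (is_RInt_comp_opp (V := C_R_CompleteNormedModule) f n 0) in h.
  apply (is_RInt_swap (V := C_R_CompleteNormedModule)) in h.
  apply (is_RInt_opp (V := C_R_CompleteNormedModule)) in h.
  rewrite opp_opp in h.
  eapply is_RInt_ext; [|exact h]. intros; simpl. apply opp_opp. }
pose proof (is_RInt_plus (V := C_R_CompleteNormedModule) _ _ 0 n _ _ h1 h2) as h.
rewrite plus_C in h.
replace (RIntC f (-n) n) with (Cplus (RIntC f 0 n) (RIntC f (-n) 0)).
- eapply is_RInt_ext; [|exact h]. intros; simpl. apply plus_C.
- rewrite <- (RInt_Chasles (V := C_R_CompleteNormedModule) f (-n) 0 n (Hex _ _) (Hex _ _)).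
  etransitivity; [|symmetry; apply plus_C]. ring.
Qed.

Lemma RInt_bound_gen (f : R -> C) (g G : R -> R) u v : u <= v ->
  @ex_RInt C_R_CompleteNormedModule f u v ->
  (forall x, u <= x <= v -> Cmod (f x) <= g x) ->
  (forall x, u <= x <= v -> is_derive G x (g x)) ->
  (forall x, u <= x <= v -> continuous g x) ->
  Cmod (RIntC f u v) <= G v - G u.
Proof.
intros Huv Hex Hfg HG Hg.
rewrite <- norm_C.
apply (norm_RInt_le (V := C_R_CompleteNormedModule) f g u v).
- auto.
- intros; rewrite norm_C; auto.
- apply RInt_correct; auto.
- apply (is_RInt_derive G g u v).
  + intros x Hx. rewrite Rmin_left, Rmax_right in Hx by lra. auto.
  + intros x Hx. rewrite Rmin_left, Rmax_right in Hx by lra. auto.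
Qed.

Lemma Cmod_swap (f : R -> C) u v : @ex_RInt C_R_CompleteNormedModule f u v ->
  Cmod (RIntC f v u) = Cmod (RIntC f u v).
Proof.
intros H. rewrite <- (opp_RInt_swap (V := C_R_CompleteNormedModule) f u v H).
destruct (RIntC f u v) as [p q]. unfold Cmod; simpl. f_equal. unfold opp; simpl. ring.
Qed.

Lemma small_tail alpha eps : 0 < alpha -> 0 < eps ->
  exists A, 1 <= A /\ 6 / alpha * exp (- (alpha * A)) < eps.
Proof.
intros Ha He.
set (A := Rmax 1 (ln (6 / (alpha * eps)) / alpha + 1)).
exists A. split. apply Rmax_l.
assert (HA : ln (6 / (alpha * eps)) / alpha + 1 <= A) by apply Rmax_r.
assert (H1 : exp (- (alpha * A)) < alpha * eps / 6).
{ replace (alpha * eps / 6) with (exp (- ln (6 / (alpha * eps)))).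
  - apply exp_increasing.
    assert (ln (6 / (alpha * eps)) < alpha * A).
    { apply (Rmult_le_compat_l alpha) in HA; [|lra].
      replace (alpha * (ln (6 / (alpha * eps)) / alpha + 1)) with (ln (6 / (alpha * eps)) + alpha) in HA by (field; lra).
      lra. }
    lra.
  - rewrite exp_Ropp, exp_ln. field. split; lra.
    apply Rdiv_lt_0_compat. lra. apply Rmult_lt_0_compat; lra. }
apply (Rmult_lt_compat_l (6/alpha)) in H1. 
replace (6 / alpha * (alpha * eps / 6)) with eps in H1 by (field; lra). exact H1.
apply Rdiv_lt_0_compat; lra.
Qed.

Lemma I_exgen alpha rho chi : 0 < alpha < 1 -> sin chi <> 0 ->
  exists l, @is_RInt_gen C_R_CompleteNormedModule (I_integrand alpha rho chi) (Rbar_locally m_infty) (Rbar_locally p_infty) l.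
Proof.
intros Ha Hs.
assert (Hex : forall a b, @ex_RInt C_R_CompleteNormedModule (I_integrand alpha rho chi) a b) by (intros; apply I_exRInt; auto).
apply ex_gen; auto.
- intros eps He. destruct (small_tail alpha eps) as [A [HA1 HA2]]; try lra.
  assert (Hk : forall u v, A <= u <= v -> Cmod (RIntC (I_integrand alpha rho chi) u v) < eps).
  { intros u v Huv.
    eapply Rle_lt_trans.
    apply (RInt_bound_gen _ (fun y => 6 * exp (- (alpha * y))) (fun y => - (6 / alpha) * exp (- (alpha * y)))); try lra; auto.
    + intros; apply tail_pos; auto; lra.
    + intros. auto_derive. auto. field. lra.
    + intros. apply (@ex_derive_continuous R_AbsRing R_NormedModule). auto_derive. auto.
    + assert (exp (- (alpha * u)) <= exp (- (alpha * A))) by (apply exp_le_exp; nra).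
      assert (0 < exp (- (alpha * v))) by apply exp_pos.
      assert (0 < 6 / alpha) by (apply Rdiv_lt_0_compat; lra).
      assert (6 / alpha * exp (- (alpha * u)) <= 6 / alpha * exp (- (alpha * A))) by (apply Rmult_le_compat_l; lra).
      assert (0 < 6 / alpha * exp (- (alpha * v))) by (apply Rmult_lt_0_compat; lra).
      lra. }
  exists A. intros u v Hu Hv. destruct (Rle_lt_dec u v).
  + apply Hk; lra.
  + rewrite Cmod_swap by auto. apply Hk; lra.
- intros eps He. destruct (small_tail alpha eps) as [A [HA1 HA2]]; try lra.
  assert (Hk : forall u v, u <= v <= -A -> Cmod (RIntC (I_integrand alpha rho chi) u v) < eps).
  { intros u v Huv.
    eapply Rle_lt_trans.
    apply (RInt_bound_gen _ (fun y => 6 * exp (alpha * y)) (fun y => (6 / alpha) * exp (alpha * y))); try lra; auto.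
    + intros; apply tail_neg; auto; lra.
    + intros. auto_derive. auto. field. lra.
    + intros. apply (@ex_derive_continuous R_AbsRing R_NormedModule). auto_derive. auto.
    + assert (exp (alpha * v) <= exp (- (alpha * A))) by (apply exp_le_exp; nra).
      assert (0 < exp (alpha * u)) by apply exp_pos.
      assert (0 < 6 / alpha) by (apply Rdiv_lt_0_compat; lra).
      assert (6 / alpha * exp (alpha * v) <= 6 / alpha * exp (- (alpha * A))) by (apply Rmult_le_compat_l; lra).
      assert (0 < 6 / alpha * exp (alpha * u)) by (apply Rmult_lt_0_compat; lra).
      lra. }
  exists (-A). intros u v Hu Hv. destruct (Rle_lt_dec u v).
  + apply Hk; lra.
  + rewrite Cmod_swap by auto. apply Hk; lra.
Qed.

Lemma combo (a b c d : C) :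
  Cplus (@minus C_R_CompleteNormedModule a b) (@minus C_R_CompleteNormedModule c d)
  = Cminus (Cplus a c) (Cplus b d).
Proof. rewrite (minus_C a b), (minus_C c d). ring. Qed.

Lemma sin_nz chi : (forall k : Z, chi <> IZR k * PI) -> sin chi <> 0.
Proof. intros H Hs. destruct (sin_eq_0_0 chi Hs) as [k Hk]. apply (H k Hk). Qed.

Lemma I_value alpha rho chi l :
  @is_RInt_gen C_R_CompleteNormedModule (I_integrand alpha rho chi) (Rbar_locally m_infty) (Rbar_locally p_infty) l ->
  I_alpha alpha rho chi = l.
Proof.
intros H. unfold I_alpha. apply (is_RInt_gen_unique (V := C_R_CompleteNormedModule) (Fa := Rbar_locally m_infty) (Fb := Rbar_locally p_infty)). exact H.
Qed.

Theorem lemma2 (alpha : R) (Ha : 0 < alpha < 1) :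
  (exists C0 : R, forall rho chi : R, 0 <= rho ->
      (forall k : Z, chi <> IZR k * PI) ->
      Cmod (I_alpha alpha rho chi) <= C0) /\
  (forall eps : R, 0 <= eps < Rmin alpha (1 - alpha) ->
     exists Ceps : R, forall rho chi : R, 0 <= rho ->
      (forall k : Z, chi <> IZR k * PI) ->
      Cmod (Cminus (I_alpha alpha rho chi) (I_alpha alpha 0 chi))
        <= Ceps * Rpower rho eps).
Proof.
split.
- exists (/ alpha + 2 * PI). intros rho chi Hr Hk.
  pose proof (sin_nz chi Hk) as Hs.
  destruct (I_exgen alpha rho chi Ha Hs) as [l Hl].
  rewrite (I_value _ _ _ _ Hl).
  apply (gen_bound _ _ _ Hl).
  intros n Hn.
  assert (Hex : forall a b, @ex_RInt C_R_CompleteNormedModule (I_integrand alpha rho chi) a b) by (intros; apply I_exRInt; auto).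
  pose proof (sym_is _ n Hex) as Hsym.
  rewrite <- (is_RInt_unique _ _ _ _ Hsym).
  eapply Rle_trans.
  apply (RInt_bound_gen _ (mfun alpha chi 0) (Gfun alpha chi 0)).
  + exact Hn.
  + exists (RIntC (I_integrand alpha rho chi) (-n) n). exact Hsym.
  + intros; apply pt_bound; auto; lra.
  + intros; apply Gfun_deriv; auto; lra.
  + intros; apply mfun_cont; auto.
  + pose proof (Gfun_diff_le alpha chi 0 n Hs ltac:(lra) Hn). rewrite Rminus_0_r in H. exact H.
- intros eps [He0 He1].
  assert (Hea : eps < alpha) by (generalize (Rmin_l alpha (1 - alpha)); lra).
  assert (Hea2 : alpha + eps <= 1) by (generalize (Rmin_r alpha (1 - alpha)); lra).
  exists (2 * (/ (alpha - eps) + 2 * PI)). intros rho chi Hr Hk.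
  pose proof (sin_nz chi Hk) as Hs.
  assert (HP : 0 < / (alpha - eps) + 2 * PI).
  { assert (0 < / (alpha - eps)) by (apply Rinv_0_lt_compat; lra). generalize PI_RGT_0. lra. }
  destruct (Req_dec rho 0) as [->|Hr0].
  { assert (Hz : forall z : C, Cminus z z = RtoC 0) by (intros [p q]; unfold Cminus, Cplus, Copp, RtoC; simpl; f_equal; ring).
    rewrite Hz, Cmod_0. apply Rmult_le_pos. lra. unfold Rpower. left; apply exp_pos. }
  assert (Hrp : 0 < rho) by lra.
  destruct (I_exgen alpha rho chi Ha Hs) as [l1 Hl1].
  destruct (I_exgen alpha 0 chi Ha Hs) as [l0 Hl0].
  rewrite (I_value _ _ _ _ Hl1), (I_value _ _ _ _ Hl0).
  pose proof (is_RInt_gen_minus (V := C_R_CompleteNormedModule) _ _ _ _ Hl1 Hl0) as Hl.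
  replace (Cminus l1 l0) with (@minus C_R_CompleteNormedModule l1 l0) by apply minus_C.
  apply (gen_bound _ _ _ Hl).
  intros n Hn.
  assert (Hex1 : forall a b, @ex_RInt C_R_CompleteNormedModule (I_integrand alpha rho chi) a b) by (intros; apply I_exRInt; auto).
  assert (Hex0 : forall a b, @ex_RInt C_R_CompleteNormedModule (I_integrand alpha 0 chi) a b) by (intros; apply I_exRInt; auto).
  assert (Hex : forall a b, @ex_RInt C_R_CompleteNormedModule (fun y => @minus C_R_CompleteNormedModule (I_integrand alpha rho chi y) (I_integrand alpha 0 chi y)) a b).
  { intros. apply (ex_RInt_minus (V := C_R_CompleteNormedModule)); [apply Hex1|apply Hex0]. }
  pose proof (sym_is _ n Hex) as Hsym.
  apply Rle_trans with (Cmod (RIntC (fun y => @minus C_R_CompleteNormedModule (I_integrand alpha rho chi y) (I_integrand alpha 0 chi y)) (-n) n)); [right; reflexivity|].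
  rewrite <- (is_RInt_unique _ _ _ _ Hsym).
  set (K := 2 * Rpower rho eps).
  assert (HK : 0 <= K) by (unfold K, Rpower; generalize (exp_pos (eps * ln rho)); lra).
  eapply Rle_trans.
  apply (RInt_bound_gen _ (fun y => K * mfun alpha chi eps y) (fun y => K * Gfun alpha chi eps y)).
  + exact Hn.
  + exists (RIntC (fun y => @minus C_R_CompleteNormedModule (I_integrand alpha rho chi y) (I_integrand alpha 0 chi y)) (-n) n). exact Hsym.
  + intros y Hy. rewrite combo. unfold K. apply pt_diff; auto; lra.
  + intros; apply is_derive_scal; apply Gfun_deriv; auto; lra.
  + intros x _. apply (@ex_derive_continuous R_AbsRing R_NormedModule).
    unfold mfun. auto_derive.
    assert (0 < sin chi * sin chi) by (apply Rsqr_pos_lt; auto).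
    assert (0 <= sinh x * sinh x) by (apply Rle_0_sqr).
    apply Rgt_not_eq. lra.
  + pose proof (Gfun_diff_le alpha chi eps n Hs Hea Hn).
    replace (K * Gfun alpha chi eps n - K * Gfun alpha chi eps 0) with (K * (Gfun alpha chi eps n - Gfun alpha chi eps 0)) by ring.
    replace (2 * (/ (alpha - eps) + 2 * PI) * Rpower rho eps) with (K * (/ (alpha - eps) + 2 * PI)) by (unfold K; ring).
    apply Rmult_le_compat_l; auto.
Qed.
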